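(* Let $(S,\sqcup,\cap)$ be an ado-semilattice and define $a\curlyvee b=(a\sqcup b)\cap(b\sqcup a)$. Then for all $a,b,c,d\in S$: (1) $a\sqcup b=a\curlyvee(a\curlyvee b)$; (2) $\curlyvee$ is commutative and idempotent; (3) $(a\curlyvee b)\sqcup(a\sqcup b)=a\sqcup b$; (4) $a\sqcup(b\curlyvee c)=(a\sqcup b)\curlyvee(a\sqcup c)$; (5) if $d\lesssim a$, $d\lesssim b$, $d\lesssim c$, $d\lesssim a\curlyvee b$ and $d\lesssim b\curlyvee c$, then $d\lesssim a\curlyvee c$.
   Context: An o-semilattice is an algebra $(L,\cap,\sqcup)$ such that $(L,\cap)$ is a semilattice and, with $x\leq y$ iff $x=x\cap y$, for all $x,y,z$: (i) $x\leq x\sqcup y$; (ii) $(x\cap y)\sqcup(y\cap z)\leq y$; (iii) $x\sqcup y\leq x\sqcup(y\cap(x\sqcup y))$; (iv) $x\cap z\leq(x\cap y)\sqcup z$. It is distributive if $(a\cap d)\sqcup((b\cap d)\cap(c\cap d))=((a\cap d)\sqcup(b\cap d))\cap((a\cap d)\sqcup(c\cap d))$ for all $a,b,c,d$. An ado-semilattice is a distributive o-semilattice in which $\sqcup$ is associative. Here $x\lesssim y$ means $y\sqcup x=y$. *)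

(* Defs.v *)
Definition ole {L : Type} (cap : L -> L -> L) (x y : L) : Prop := x = cap x y.

Record o_semilattice (L : Type) (cap sqcup : L -> L -> L) : Prop := {
  os_cap_assoc : forall x y z, cap x (cap y z) = cap (cap x y) z;
  os_cap_comm  : forall x y, cap x y = cap y x;
  os_cap_idem  : forall x, cap x x = x;
  os_i   : forall x y, ole cap x (sqcup x y);
  os_ii  : forall x y z, ole cap (sqcup (cap x y) (cap y z)) y;
  os_iii : forall x y, ole cap (sqcup x y) (sqcup x (cap y (sqcup x y)));
  os_iv  : forall x y z, ole cap (cap x z) (sqcup (cap x y) z)
}.

Definition distributive_os (L : Type) (cap sqcup : L -> L -> L) : Prop :=
  forall a b c d,
    sqcup (cap a d) (cap (cap b d) (cap c d)) =
    cap (sqcup (cap a d) (cap b d)) (sqcup (cap a d) (cap c d)).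

Record ado_semilattice (L : Type) (cap sqcup : L -> L -> L) : Prop := {
  ado_os : o_semilattice L cap sqcup;
  ado_distr : distributive_os L cap sqcup;
  ado_assoc : forall x y z, sqcup x (sqcup y z) = sqcup (sqcup x y) z
}.

Definition qle {L : Type} (sqcup : L -> L -> L) (x y : L) : Prop := sqcup y x = y.

Definition cvee {L : Type} (cap sqcup : L -> L -> L) (a b : L) : L :=
  cap (sqcup a b) (sqcup b a).

(* Main.v *)
Require Import Defs.
From Stdlib Require Import Setoid.


Lemma cA {S} {cap sqcup : S -> S -> S} (HS : ado_semilattice S cap sqcup) x y z :
  cap x (cap y z) = cap (cap x y) z.
Proof. exact (os_cap_assoc _ _ _ (ado_os _ _ _ HS) x y z). Qed.
Lemma cC {S} {cap sqcup : S -> S -> S} (HS : ado_semilattice S cap sqcup) x y :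
  cap x y = cap y x.
Proof. exact (os_cap_comm _ _ _ (ado_os _ _ _ HS) x y). Qed.
Lemma cI {S} {cap sqcup : S -> S -> S} (HS : ado_semilattice S cap sqcup) x :
  cap x x = x.
Proof. exact (os_cap_idem _ _ _ (ado_os _ _ _ HS) x). Qed.
Lemma jA {S} {cap sqcup : S -> S -> S} (HS : ado_semilattice S cap sqcup) x y z :
  sqcup x (sqcup y z) = sqcup (sqcup x y) z.
Proof. exact (ado_assoc _ _ _ HS x y z). Qed.

Lemma le_refl {S} {cap sqcup : S -> S -> S} (HS : ado_semilattice S cap sqcup) x :
  ole cap x x.
Proof. unfold ole. now rewrite (cI HS). Qed.

Lemma le_trans {S} {cap sqcup : S -> S -> S} (HS : ado_semilattice S cap sqcup) x y z :
  ole cap x y -> ole cap y z -> ole cap x z.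
Proof. unfold ole; intros H1 H2. rewrite H1 at 1. rewrite H2. rewrite (cA HS). now rewrite <- H1. Qed.

Lemma le_antisym {S} {cap sqcup : S -> S -> S} (HS : ado_semilattice S cap sqcup) x y :
  ole cap x y -> ole cap y x -> x = y.
Proof. unfold ole; intros H1 H2. transitivity (cap x y); [exact H1|]. rewrite (cC HS). symmetry; exact H2. Qed.

Lemma meet_l {S} {cap sqcup : S -> S -> S} (HS : ado_semilattice S cap sqcup) x y :
  ole cap (cap x y) x.
Proof. unfold ole. rewrite (cC HS (cap x y) x), (cA HS), (cI HS). reflexivity. Qed.

Lemma meet_r {S} {cap sqcup : S -> S -> S} (HS : ado_semilattice S cap sqcup) x y :
  ole cap (cap x y) y.
Proof. unfold ole. rewrite <- (cA HS), (cI HS). reflexivity. Qed.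

Lemma meet_glb {S} {cap sqcup : S -> S -> S} (HS : ado_semilattice S cap sqcup) x y z :
  ole cap z x -> ole cap z y -> ole cap z (cap x y).
Proof. unfold ole; intros H1 H2. rewrite (cA HS), <- H1. exact H2. Qed.

Lemma le_eq_l {S} {cap sqcup : S -> S -> S} (HS : ado_semilattice S cap sqcup) x y :
  ole cap x y -> cap x y = x.
Proof. unfold ole; intros H; now rewrite <- H. Qed.

Lemma le_eq_r {S} {cap sqcup : S -> S -> S} (HS : ado_semilattice S cap sqcup) x y :
  ole cap x y -> cap y x = x.
Proof. unfold ole; intros H; now rewrite (cC HS), <- H. Qed.

Lemma ji {S} {cap sqcup : S -> S -> S} (HS : ado_semilattice S cap sqcup) x y :
  ole cap x (sqcup x y).
Proof. exact (os_i _ _ _ (ado_os _ _ _ HS) x y). Qed.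

Lemma F2 {S} {cap sqcup : S -> S -> S} (HS : ado_semilattice S cap sqcup) a b y :
  ole cap a y -> ole cap b y -> ole cap (sqcup a b) y.
Proof.
  intros Ha Hb. pose proof (os_ii _ _ _ (ado_os _ _ _ HS) a y b) as H.
  rewrite (le_eq_l HS _ _ Ha), (le_eq_r HS _ _ Hb) in H. exact H.
Qed.

Lemma jI {S} {cap sqcup : S -> S -> S} (HS : ado_semilattice S cap sqcup) x :
  sqcup x x = x.
Proof. apply (le_antisym HS). apply (F2 HS); apply (le_refl HS). apply (ji HS). Qed.

Lemma F3a {S} {cap sqcup : S -> S -> S} (HS : ado_semilattice S cap sqcup) x y :
  ole cap y x -> sqcup x y = x.
Proof. intros H. apply (le_antisym HS). apply (F2 HS); auto. apply (le_refl HS). apply (ji HS). Qed.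

Lemma IVp {S} {cap sqcup : S -> S -> S} (HS : ado_semilattice S cap sqcup) a X Z :
  ole cap a X -> ole cap (cap X Z) (sqcup a Z).
Proof.
  intros H. pose proof (os_iv _ _ _ (ado_os _ _ _ HS) X a Z) as H4.
  rewrite (le_eq_r HS _ _ H) in H4. exact H4.
Qed.

Lemma F3b {S} {cap sqcup : S -> S -> S} (HS : ado_semilattice S cap sqcup) x y :
  ole cap x y -> sqcup x y = y.
Proof.
  intros H. apply (le_antisym HS). apply (F2 HS); auto. apply (le_refl HS).
  pose proof (IVp HS x y y H) as H1. rewrite (cI HS) in H1. exact H1.
Qed.

Lemma C1 {S} {cap sqcup : S -> S -> S} (HS : ado_semilattice S cap sqcup) y z w :
  ole cap y w -> ole cap z w -> ole cap z (sqcup y z).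
Proof.
  intros Hy Hz. pose proof (IVp HS y w z Hy) as H. rewrite (le_eq_r HS _ _ Hz) in H. exact H.
Qed.

Lemma Ccomm {S} {cap sqcup : S -> S -> S} (HS : ado_semilattice S cap sqcup) y z w :
  ole cap y w -> ole cap z w -> sqcup y z = sqcup z y.
Proof.
  intros Hy Hz. apply (le_antisym HS); apply (F2 HS).
  - apply (C1 HS z y w); auto.
  - apply (ji HS).
  - apply (C1 HS y z w); auto.
  - apply (ji HS).
Qed.

Lemma iii_eq {S} {cap sqcup : S -> S -> S} (HS : ado_semilattice S cap sqcup) x y :
  sqcup x y = sqcup x (cap y (sqcup x y)).
Proof.
  apply (le_antisym HS).
  - exact (os_iii _ _ _ (ado_os _ _ _ HS) x y).
  - apply (F2 HS). apply (ji HS). apply (meet_r HS).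
Qed.

Lemma DistI {S} {cap sqcup : S -> S -> S} (HS : ado_semilattice S cap sqcup) a b c w :
  ole cap a w -> ole cap b w -> ole cap c w ->
  sqcup a (cap b c) = cap (sqcup a b) (sqcup a c).
Proof.
  intros Ha Hb Hc. pose proof (ado_distr _ _ _ HS a b c w) as H.
  rewrite (le_eq_l HS _ _ Ha), (le_eq_l HS _ _ Hb), (le_eq_l HS _ _ Hc) in H. exact H.
Qed.

Lemma RDistI {S} {cap sqcup : S -> S -> S} (HS : ado_semilattice S cap sqcup) a b c w :
  ole cap a w -> ole cap b w -> ole cap c w ->
  sqcup (cap b c) a = cap (sqcup b a) (sqcup c a).
Proof.
  intros Ha Hb Hc.
  assert (Hbc : ole cap (cap b c) w) by (apply (le_trans HS _ b); auto; apply (meet_l HS)).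
  rewrite (Ccomm HS _ _ w Hbc Ha), (DistI HS a b c w Ha Hb Hc).
  rewrite (Ccomm HS a b w Ha Hb), (Ccomm HS a c w Ha Hc). reflexivity.
Qed.

Lemma MD {S} {cap sqcup : S -> S -> S} (HS : ado_semilattice S cap sqcup) A B C w :
  ole cap A w -> ole cap B w -> ole cap C w ->
  cap A (sqcup B C) = sqcup (cap A B) (cap A C).
Proof.
  intros HA HB HC.
  assert (HAB : ole cap (cap A B) w) by (apply (le_trans HS _ A); auto; apply (meet_l HS)).
  assert (HAC : ole cap (cap A C) w) by (apply (le_trans HS _ A); auto; apply (meet_l HS)).
  rewrite (DistI HS (cap A B) A C w HAB HA HC).
  rewrite (F3b HS _ _ (meet_l HS A B)).
  rewrite (Ccomm HS _ _ w HAB HC).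
  rewrite (DistI HS C A B w HC HA HB).
  rewrite (cA HS). rewrite (le_eq_l HS A (sqcup C A)).
  - now rewrite (Ccomm HS C B w HC HB).
  - apply (C1 HS C A w); auto.
Qed.

Lemma Mono {S} {cap sqcup : S -> S -> S} (HS : ado_semilattice S cap sqcup) a x y :
  ole cap x y -> ole cap (sqcup a x) (sqcup a y).
Proof.
  intros Hxy. rewrite (iii_eq HS a x). apply (F2 HS).
  - apply (ji HS).
  - apply (le_trans HS _ (cap (sqcup a x) y)).
    + apply (meet_glb HS). apply (meet_r HS).
      apply (le_trans HS _ x); auto. apply (meet_l HS).
    + apply (IVp HS). apply (ji HS).
Qed.

Lemma Lgen {S} {cap sqcup : S -> S -> S} (HS : ado_semilattice S cap sqcup) a y z :
  sqcup a (cap y z) = cap (sqcup a y) (sqcup a z).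
Proof.
  set (m := cap (sqcup a y) (sqcup a z)).
  assert (Ham : ole cap a m) by (apply (meet_glb HS); apply (ji HS)).
  assert (Hmy : ole cap m (sqcup a y)) by (apply (meet_l HS)).
  assert (Hmz : ole cap m (sqcup a z)) by (apply (meet_r HS)).
  assert (K : forall t, ole cap m (sqcup a t) -> ole cap m (sqcup a (cap m t))).
  { intros t Hmt. set (w := sqcup a t).
    assert (Hw : w = sqcup a (cap t w)) by apply (iii_eq HS).
    assert (Haw : ole cap a w) by (apply (ji HS)).
    assert (Htw : ole cap (cap t w) w) by (apply (meet_r HS)).
    assert (E : m = cap m w) by exact Hmt.
    assert (E2 : cap m w = sqcup (cap m a) (cap m (cap t w))).
    { rewrite Hw at 1. apply (MD HS m a (cap t w) w); auto. }
    rewrite (le_eq_r HS _ _ Ham) in E2.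
    rewrite (cA HS m t w) in E2. rewrite (cC HS (cap m t) w) in E2.
    rewrite (cA HS w m t) in E2. rewrite (cC HS w m) in E2. rewrite <- E in E2.
    unfold ole. rewrite <- E2. symmetry. apply (cI HS). }
  apply (le_antisym HS).
  - apply (meet_glb HS); apply (Mono HS). apply (meet_l HS). apply (meet_r HS).
  - assert (Hy : ole cap m (sqcup a (cap m y))) by (apply K; auto).
    assert (Hz : ole cap m (sqcup a (cap m z))) by (apply K; auto).
    assert (D : sqcup a (cap (cap m y) (cap m z)) = cap (sqcup a (cap m y)) (sqcup a (cap m z))).
    { apply (DistI HS _ _ _ m); auto; apply (meet_l HS). }
    apply (le_trans HS _ (sqcup a (cap (cap m y) (cap m z)))).
    + rewrite D. apply (meet_glb HS); auto.
    + apply (Mono HS). apply (meet_glb HS).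
      * apply (le_trans HS _ (cap m y)). apply (meet_l HS). apply (meet_r HS).
      * apply (le_trans HS _ (cap m z)). apply (meet_r HS). apply (meet_r HS).
Qed.

Lemma LRB {S} {cap sqcup : S -> S -> S} (HS : ado_semilattice S cap sqcup) a b c :
  sqcup (sqcup a b) (sqcup a c) = sqcup a (sqcup b c).
Proof.
  rewrite (jA HS (sqcup a b) a c), (F3a HS (sqcup a b) a (ji HS a b)). symmetry. apply (jA HS).
Qed.

Lemma R_half {S} {cap sqcup : S -> S -> S} (HS : ado_semilattice S cap sqcup) p q e d :
  ole cap p e -> ole cap q e -> sqcup p d = p -> sqcup q d = q ->
  ole cap (sqcup (cap p q) d) q.
Proof.
  intros Hp Hq Hpd Hqd.
  set (q' := cap q (sqcup d q)).
  assert (Hq'q : ole cap q' q) by apply (meet_l HS).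
  assert (Hq'e : ole cap q' e) by (apply (le_trans HS _ q); auto).
  assert (Ea : sqcup d q = sqcup d q') by apply (iii_eq HS).
  assert (Eb : sqcup q' d = sqcup d q').
  { apply (Ccomm HS _ _ (sqcup d q')).
    - rewrite <- Ea. apply (meet_r HS).
    - apply (ji HS). }
  assert (Ec : sqcup p q' = sqcup p q).
  { rewrite <- Hpd at 2. rewrite <- (jA HS), Ea, (jA HS), Hpd. reflexivity. }
  assert (Ed : sqcup (cap p q) q' = q).
  { rewrite (RDistI HS q' p q e); auto.
    rewrite Ec, (F3a HS q q' Hq'q).
    apply (le_eq_r HS). apply (C1 HS p q e); auto. }
  assert (Ee : sqcup (sqcup (cap p q) d) q' = q).
  { rewrite <- (jA HS), <- Eb, (jA HS), Ed. exact Hqd. }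
  rewrite <- Ee at 2. apply (ji HS).
Qed.

Lemma Rlem {S} {cap sqcup : S -> S -> S} (HS : ado_semilattice S cap sqcup) p q e d :
  ole cap p e -> ole cap q e -> qle sqcup d p -> qle sqcup d q ->
  qle sqcup d (cap p q).
Proof.
  unfold qle. intros Hp Hq Hpd Hqd. apply (le_antisym HS).
  - apply (meet_glb HS).
    + rewrite (cC HS p q). apply (R_half HS q p e d); auto.
    + apply (R_half HS p q e d); auto.
  - apply (ji HS).
Qed.

Lemma qle_mono {S} {cap sqcup : S -> S -> S} (HS : ado_semilattice S cap sqcup) d y z :
  qle sqcup d y -> ole cap y z -> qle sqcup d z.
Proof.
  unfold qle. intros H Hyz. rewrite <- (F3a HS z y Hyz) at 1.
  rewrite <- (jA HS), H. apply (F3a HS); auto.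
Qed.

Lemma agree {S} {cap sqcup : S -> S -> S} (HS : ado_semilattice S cap sqcup) a b d :
  qle sqcup d a -> qle sqcup d b -> qle sqcup d (cvee cap sqcup a b) ->
  qle sqcup d (cap a b).
Proof.
  intros Ha Hb Hv. unfold cvee in *.
  set (v := cap (sqcup a b) (sqcup b a)) in *.
  assert (H1 : qle sqcup d (cap v a)).
  { apply (Rlem HS v a (sqcup a b) d); auto. apply (meet_l HS). apply (ji HS). }
  assert (H2 : qle sqcup d (cap v b)).
  { apply (Rlem HS v b (sqcup b a) d); auto. apply (meet_r HS). apply (ji HS). }
  assert (H3 : qle sqcup d (cap (cap v a) (cap v b))).
  { apply (Rlem HS _ _ v d); auto; apply (meet_l HS). }
  apply (qle_mono HS _ _ _ H3). apply (meet_glb HS).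
  - apply (le_trans HS _ (cap v a)). apply (meet_l HS). apply (meet_r HS).
  - apply (le_trans HS _ (cap v b)). apply (meet_r HS). apply (meet_r HS).
Qed.

Theorem proposition3p8 (S : Type) (cap sqcup : S -> S -> S)
  (HS : ado_semilattice S cap sqcup) :
  let vee := cvee cap sqcup in
  (forall a b, sqcup a b = vee a (vee a b)) /\
  (forall a b, vee a b = vee b a) /\ (forall a, vee a a = a) /\
  (forall a b, sqcup (vee a b) (sqcup a b) = sqcup a b) /\
  (forall a b c, sqcup a (vee b c) = vee (sqcup a b) (sqcup a c)) /\
  (forall a b c d,
     qle sqcup d a -> qle sqcup d b -> qle sqcup d c ->
     qle sqcup d (vee a b) -> qle sqcup d (vee b c) ->
     qle sqcup d (vee a c)).
Proof.
  intros vee. unfold vee, cvee.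
  split; [|split; [|split; [|split; [|split]]]].
  - intros a b. set (v := cap (sqcup a b) (sqcup b a)).
    assert (Hv : ole cap v (sqcup a b)) by apply (meet_l HS).
    assert (Ha : ole cap a (sqcup a b)) by apply (ji HS).
    assert (E1 : sqcup a v = sqcup a b).
    { apply (le_antisym HS).
      - apply (F2 HS); auto.
      - set (u := cap b (sqcup a b)).
        assert (Hu : ole cap u v).
        { apply (meet_glb HS). apply (meet_r HS).
          apply (le_trans HS _ b). apply (meet_l HS). apply (ji HS). }
        assert (Hu2 : ole cap u (sqcup a b)) by apply (meet_r HS).
        rewrite (iii_eq HS a b). fold u.
        pose proof (DistI HS a u v (sqcup a b) Ha Hu2 Hv) as D.
        rewrite (le_eq_l HS _ _ Hu) in D. exact D. }
    rewrite (Ccomm HS v a (sqcup a b) Hv Ha), E1. symmetry. apply (cI HS).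
  - intros a b. apply (cC HS).
  - intros a. rewrite (jI HS). apply (cI HS).
  - intros a b. apply (F3b HS). apply (meet_l HS).
  - intros a b c. rewrite (Lgen HS).
    rewrite (LRB HS a b c), (LRB HS a c b). reflexivity.
  - intros a b c d Ha Hb Hc Hab Hbc.
    pose proof (agree HS a b d Ha Hb Hab) as H1.
    pose proof (agree HS b c d Hb Hc Hbc) as H2.
    pose proof (Rlem HS _ _ b d (meet_r HS a b) (meet_l HS b c) H1 H2) as H3.
    apply (qle_mono HS _ _ _ H3). apply (meet_glb HS).
    + apply (le_trans HS _ a). apply (le_trans HS _ (cap a b)). apply (meet_l HS). apply (meet_l HS). apply (ji HS).
    + apply (le_trans HS _ c). apply (le_trans HS _ (cap b c)). apply (meet_r HS). apply (meet_r HS). apply (ji HS).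
Qed.
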